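(* For every integer $t\ge 14$, every graph $K_{3,t}^+$ belongs to $\mathcal{S}_3$.
   Context: Graphs may have parallel edges but no loops. For an integer $t\ge4$, $K_{3,t}^+$ denotes any $4$-edge-connected graph on $t+3$ vertices that contains the complete bipartite graph $K_{3,t}$ as a spanning subgraph. $G\in\mathcal{S}_3$ means: for every $\beta:V(G)\to\mathbb{Z}_3$ with $\sum_v\beta(v)\equiv0\pmod3$ there is a strongly-connected orientation $D$ of $G$ with $d^+_D(v)-d^-_D(v)\equiv\beta(v)\pmod3$ for all $v$. *)

(* Defs.v *)
From HB Require Import structures.
From mathcomp Require Import all_boot all_order all_algebra.
Set Implicit Arguments. Unset Strict Implicit. Unset Printing Implicit Defensive.
Import GRing.Theory.

(* A (multi)graph on vertex type V: a finite type E of edges, each edge e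
   having two end-vertices src e, tgt e (the names are mere labels, the
   graph is undirected).  Parallel edges are allowed (distinct edges may
   have the same ends); loops are excluded by the hypothesis
   [loopless src tgt]. *)
Definition loopless (V E : finType) (src tgt : E -> V) : Prop :=
  forall e, src e != tgt e.

Definition joins (V E : finType) (src tgt : E -> V) (e : E) (x y : V) : bool :=
  ((src e == x) && (tgt e == y)) || ((src e == y) && (tgt e == x)).

Definition connected_minus (V E : finType) (src tgt : E -> V) (F : {set E}) :
  Prop :=
  forall u v : V,
    connect (fun x y => [exists e, (e \notin F) && joins src tgt e x y]) u v.

Definition k_edge_connected (k : nat) (V E : finType) (src tgt : E -> V) : Prop :=
  forall F : {set E}, #|F| < k -> connected_minus src tgt F.

(* G contains K_{3,t} as a spanning subgraph, t = #|V| - 3: some 3-set A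
   of vertices such that every vertex of A is joined by an edge to every
   vertex outside A. *)
Definition contains_spanning_K3 (V E : finType) (src tgt : E -> V) : Prop :=
  exists A : {set V}, #|A| = 3 /\
    forall a b, a \in A -> b \notin A -> exists e, joins src tgt e a b.

Definition otail (V E : finType) (src tgt : E -> V) (D : E -> bool) (e : E) : V :=
  if D e then src e else tgt e.
Definition ohead (V E : finType) (src tgt : E -> V) (D : E -> bool) (e : E) : V :=
  if D e then tgt e else src e.

Definition outdeg (V E : finType) (src tgt : E -> V) (D : E -> bool) (v : V) : nat :=
  #|[set e | otail src tgt D e == v]|.
Definition indeg (V E : finType) (src tgt : E -> V) (D : E -> bool) (v : V) : nat :=
  #|[set e | ohead src tgt D e == v]|.

Definition strongly_connected (V E : finType) (src tgt : E -> V) (D : E -> bool)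
  : Prop :=
  forall u v : V,
    connect (fun x y => [exists e, (otail src tgt D e == x) &&
                                   (ohead src tgt D e == y)]) u v.

Definition in_S3 (V E : finType) (src tgt : E -> V) : Prop :=
  forall beta : V -> 'Z_3, (\sum_(v : V) beta v = 0)%R ->
    exists D : E -> bool, strongly_connected src tgt D /\
      forall v, ((outdeg src tgt D v)%:R - (indeg src tgt D v)%:R = beta v)%R.

(* Main.v *)
Require Import Defs.
From HB Require Import structures.
From mathcomp Require Import all_boot all_order all_algebra.
From mathcomp Require Import zify ring.
Set Implicit Arguments. Unset Strict Implicit. Unset Printing Implicit Defensive.
Import GRing.Theory.

Module Fin.
Open Scope ring_scope.

Lemma Z3_cases (x : 'Z_3) : [\/ x = 0, x = 1 | x = 2].
Proof.
case: x => [[|[|[|n]]] H]; [apply: Or31|apply: Or32|apply: Or33|by []]; exact: val_inj.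
Qed.
Lemma I3_cases (x : 'I_3) : [\/ x = 0, x = 1 | x = 2].
Proof.
case: x => [[|[|[|n]]] H]; [apply: Or31|apply: Or32|apply: Or33|by []]; exact: val_inj.
Qed.

Definition sgn (i j : 'I_3) : 'Z_3 := if i == j then -1 else 1.
Definition outb (g : 'Z_3) (w a : 'I_3) : bool := if g == 1 then a != w else a == w.

Ltac ex3 := (exists 0%R + exists 1%R + exists 2%R).
Ltac gsolve := lazymatch goal with |- _ => once (ex3; ex3; ex3; ex3;
  (let i := fresh "i" in move=> i; case: (I3_cases i) => ->; vm_compute; by [])) end.
Ltac vsolve := lazymatch goal with |- _ => once (ex3; ex3; ex3; ex3;
  split; apply/eqP; vm_compute; reflexivity) end.

Lemma gadget (g0 g1 g2 : 'Z_3) : g0 != 0 -> g1 != 0 -> g2 != 0 ->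
 exists w0 w1 w2 h : 'I_3, forall i : 'I_3, i != h ->
  [|| (~~ outb g0 w0 i && outb g0 w0 h), (~~ outb g1 w1 i && outb g1 w1 h)
    | (~~ outb g2 w2 i && outb g2 w2 h)] &&
  [|| (~~ outb g0 w0 h && outb g0 w0 i), (~~ outb g1 w1 h && outb g1 w1 i)
    | (~~ outb g2 w2 h && outb g2 w2 i)].
Proof.
case: (Z3_cases g0) => ->; [by []| |].
all: case: (Z3_cases g1) => ->; [by []| |].
all: case: (Z3_cases g2) => ->; [by []| |].
all: move=> _ _ _.
all: gsolve.
Qed.

Lemma value4 (g3 g4 g5 g6 t0 t1 : 'Z_3) : g3 != 0 -> g4 != 0 -> g5 != 0 -> g6 != 0 ->
  exists w3 w4 w5 w6 : 'I_3,
   g3 * sgn 0 w3 + g4 * sgn 0 w4 + g5 * sgn 0 w5 + g6 * sgn 0 w6 = t0 /\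
   g3 * sgn 1 w3 + g4 * sgn 1 w4 + g5 * sgn 1 w5 + g6 * sgn 1 w6 = t1.
Proof.
case: (Z3_cases g3) => ->; [by []| |].
all: case: (Z3_cases g4) => ->; [by []| |].
all: case: (Z3_cases g5) => ->; [by []| |].
all: case: (Z3_cases g6) => ->; [by []| |].
all: move=> _ _ _ _.
all: case: (Z3_cases t0) => ->; case: (Z3_cases t1) => ->.
all: vsolve.
Qed.

End Fin.
Import Fin.
Close Scope ring_scope.

Lemma Z3_neg (c : 'Z_3) : (- c = c + c)%R.
Proof. by case: (Z3_cases c) => ->; apply/eqP; vm_compute. Qed.

Section Main.
Variables (V E : finType) (src tgt : E -> V).
Hypothesis loopl : loopless src tgt.
Definition inc (e : E) (v : V) := (src e == v) || (tgt e == v).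
Definition oth (e : E) (v : V) := if src e == v then tgt e else src e.
Local Notation tlD := (otail src tgt).
Local Notation hdD := (Defs.ohead src tgt).

Lemma tl_hd_ne D e : tlD D e != hdD D e.
Proof.
rewrite /otail /Defs.ohead; case: (D e); first exact: loopl.
by rewrite eq_sym; exact: loopl.
Qed.

Lemma inc_tlhd D e v : inc e v = (tlD D e == v) || (hdD D e == v).
Proof. by rewrite /inc /otail /Defs.ohead; case: (D e) => //; rewrite orbC. Qed.

Lemma inc_tl D e : inc e (tlD D e).
Proof. by rewrite (inc_tlhd D) eqxx. Qed.
Lemma inc_hd D e : inc e (hdD D e).
Proof. by rewrite (inc_tlhd D) eqxx orbT. Qed.

Lemma inc_oth e v : inc e v -> inc e (oth e v).
Proof. by rewrite /inc /oth; case: ifP => _; rewrite eqxx ?orbT. Qed.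

Lemma oth_ne e v : inc e v -> oth e v != v.
Proof.
rewrite /inc /oth; case: ifP => [/eqP <- _|]; first by rewrite eq_sym; exact: loopl.
by move=> _ /= /eqP <-; exact: loopl.
Qed.

Lemma inc_cases e v x : inc e v -> inc e x -> x = v \/ x = oth e v.
Proof.
rewrite /inc /oth; case: (boolP (src e == v)) => [/eqP<-|nsv] /=.
  by move=> _ /orP[/eqP->|/eqP->]; [left|right].
move=> /eqP<- /orP[/eqP->|/eqP->]; [by right|by left].
Qed.

Lemma joins_inc e x y : joins src tgt e x y -> inc e x && inc e y.
Proof.
by rewrite /joins /inc => /orP[/andP[/eqP-> /eqP->]|/andP[/eqP-> /eqP->]];
  rewrite !eqxx ?orbT.
Qed.

Lemma joins_ne e x y : joins src tgt e x y -> x != y.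
Proof.
rewrite /joins => /orP[/andP[/eqP<- /eqP<-]|/andP[/eqP<- /eqP<-]];
  [exact: loopl| rewrite eq_sym; exact: loopl].
Qed.

Lemma joins_inc_cases e x y v : joins src tgt e x y -> inc e v -> v = x \/ v = y.
Proof.
rewrite /joins /inc => /orP[/andP[/eqP-> /eqP->]|/andP[/eqP-> /eqP->]] /orP[/eqP<-|/eqP<-];
  by [left|right].
Qed.

Lemma tl_or_hd D e v : inc e v -> tlD D e != v -> hdD D e = v.
Proof. by rewrite (inc_tlhd D) => /orP[/eqP->|/eqP->]; rewrite ?eqxx. Qed.

Variable A : {set V}.
Variable k : V -> V -> E.
Hypothesis kJ : forall a b, a \in A -> b \notin A -> joins src tgt (k a b) a b.
Variable beta : V -> 'Z_3.


Definition K : {set E} := [set k p.1 p.2 | p in setX A (~: A)].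
Local Open Scope ring_scope.
Definition contrib (D : E -> bool) e v : 'Z_3 := (tlD D e == v)%:R - (hdD D e == v)%:R.
Definition flowX D v := \sum_(e | e \notin K) contrib D e v.
Definition flowT D v := \sum_e contrib D e v.
Definition bad D : {set V} := [set b in ~: A | beta b == flowX D b].
Definition flip (D : {ffun E -> bool}) e0 : {ffun E -> bool} :=
  [ffun e => if e == e0 then ~~ D e else D e].

Lemma contrib_ext D D' e v : D e = D' e -> contrib D e v = contrib D' e v.
Proof. by rewrite /contrib /otail /Defs.ohead => ->. Qed.

Lemma contrib_ninc D e v : ~~ inc e v -> contrib D e v = 0.
Proof.
rewrite /contrib (inc_tlhd D) negb_or => /andP[/negbTE-> /negbTE->].
by rewrite subrr.
Qed.

Lemma contrib_tl D e : contrib D e (tlD D e) = 1.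
Proof.
by rewrite /contrib eqxx eq_sym (negbTE (tl_hd_ne D e)) subr0.
Qed.
Lemma contrib_hd D e : contrib D e (hdD D e) = -1.
Proof.
by rewrite /contrib eqxx (negbTE (tl_hd_ne D e)) sub0r.
Qed.

Lemma contrib_inc D e v : inc e v -> contrib D e v != 0.
Proof.
move=> ie; case: (eqVneq (tlD D e) v) => [<-|ne]; first by rewrite contrib_tl oner_eq0.
by rewrite -(tl_or_hd ie ne) contrib_hd oppr_eq0 oner_eq0.
Qed.

Lemma contrib_flip (D : {ffun E -> bool}) e0 v : contrib (flip D e0) e0 v = - contrib D e0 v.
Proof.
by rewrite /contrib /otail /Defs.ohead /flip ffunE eqxx; case: (D e0) => /=; rewrite opprB.
Qed.

Lemma flowX_flip (D : {ffun E -> bool}) e0 v : e0 \notin K ->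
  flowX (flip D e0) v = flowX D v + contrib D e0 v.
Proof.
move=> e0K; rewrite /flowX (bigD1 e0) //= [in RHS](bigD1 e0) //= contrib_flip.
rewrite (eq_bigr (fun e => contrib D e v)); last first.
  by move=> e /andP[_ ne]; apply: contrib_ext; rewrite /flip ffunE (negbTE ne).
by rewrite Z3_neg addrAC addrA.
Qed.

Lemma bad_flip_inc (D : {ffun E -> bool}) e0 v : e0 \notin K -> inc e0 v ->
  v \in bad (flip D e0) -> v \notin bad D.
Proof.
move=> e0K ie; rewrite !inE flowX_flip // => /andP[vB /eqP ->]; rewrite vB /=.
by rewrite -subr_eq0 addrC addKr contrib_inc.
Qed.

Lemma bad_flip_ninc (D : {ffun E -> bool}) e0 v : e0 \notin K -> ~~ inc e0 v ->
  (v \in bad (flip D e0)) = (v \in bad D).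
Proof. by move=> e0K ni; rewrite !inE flowX_flip // contrib_ninc // addr0. Qed.

Lemma kK a b : a \in A -> b \notin A -> k a b \in K.
Proof. by move=> aA bB; apply/imsetP; exists (a, b) => //; rewrite inE aA inE bB. Qed.

Lemma K_inv e : e \in K -> exists a b, [/\ a \in A, b \notin A & e = k a b].
Proof.
case/imsetP => [[a b]]; rewrite inE /= inE => /andP[aA bB] ->.
by exists a, b.
Qed.

Lemma k_inj a b a' b' : a \in A -> b \notin A -> a' \in A -> b' \notin A ->
  k a b = k a' b' -> a = a' /\ b = b'.
Proof.
move=> aA bB aA' bB' E1.
have /andP[ia ib] := joins_inc (kJ aA bB).
rewrite E1 in ia ib.
case: (joins_inc_cases (kJ aA' bB') ia) => ea; last by move: bB'; rewrite -ea aA.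
case: (joins_inc_cases (kJ aA' bB') ib) => eb; first by move: bB; rewrite eb aA'.
by [].
Qed.

Lemma inc_k a b v : a \in A -> b \notin A -> inc (k a b) v -> v = a \/ v = b.
Proof. by move=> aA bB; apply: joins_inc_cases; apply: kJ. Qed.

Lemma extra_edge (cardA : #|A| = 3%N) (conn4 : k_edge_connected 4 src tgt)
   a0 b : a0 \in A -> b \notin A -> exists e, (e \notin K) && inc e b.
Proof.
move=> a0A bB.
case: (pickP (fun e => (e \notin K) && inc e b)) => [e He|none]; first by exists e.
pose F := [set e | inc e b].
have sub : F \subset [set k a b | a in A].
  apply/subsetP => e; rewrite inE => ie.
  have := none e; rewrite ie andbT => /negbFE /K_inv [a [b' [aA bB' ee]]].
  have ie' : inc (k a b') b by rewrite -ee.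
  case: (inc_k aA bB' ie') => eb; first by move: bB; rewrite eb aA.
  by apply/imsetP; exists a => //; rewrite ee eb.
have cF : (#|F| < 4)%N.
  apply: (leq_ltn_trans (subset_leq_card sub)).
  by apply: (leq_ltn_trans (leq_imset_card _ _)); rewrite cardA.
have /connectP [p Hp Hl] := conn4 F cF b a0.
case: p Hp Hl => [_ /= ea0|x p /= /andP[/existsP [e /andP[eF je]] _] _].
  by move: bB; rewrite -ea0 a0A.
by move: eF; rewrite inE; have /andP[-> _] := joins_inc je.
Qed.

Variable Dm : {ffun E -> bool}.
Hypothesis Dmin : forall D, (#|bad Dm| <= #|bad D|)%N.

Lemma bad_nb b e : b \in bad Dm -> e \notin K -> inc e b ->
  (oth e b \notin A) && (oth e b \notin bad Dm).
Proof.
move=> bb eK ie; case: (boolP ((oth e b \notin A) && (oth e b \notin bad Dm))) => // Hn.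
suff : (#|bad (flip Dm e)| < #|bad Dm|)%N by rewrite ltnNge Dmin.
apply: (@leq_ltn_trans #|bad Dm :\ b|); last by rewrite [X in (_ < X)%N](cardsD1 b) bb.
apply/subset_leq_card/subsetP => v vb.
case: (boolP (inc e v)) => iv.
  have nb := bad_flip_inc eK iv vb.
  have vB : v \notin A by move: vb; rewrite /bad !inE => /andP[].
  case: (inc_cases ie iv) => ev; first by move: nb; rewrite ev bb.
  by move: Hn; rewrite -ev vB nb.
rewrite (bad_flip_ninc _ eK iv) in vb.
rewrite in_setD1 vb andbT; apply: contraNneq iv => ->; exact: ie.
Qed.

Lemma no_two g u w e1 e2 : g \notin bad Dm -> u \in bad Dm -> w \in bad Dm -> u != w ->
  e1 \notin K -> e2 \notin K -> inc e1 u -> oth e1 u = g -> inc e2 w -> oth e2 w = g -> False.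
Proof.
move=> gb ub wb uw e1K e2K i1 o1 i2 o2.
have ig1 : inc e1 g by rewrite -o1; apply: inc_oth.
have ig2 : inc e2 g by rewrite -o2; apply: inc_oth.
have gu : g != u by apply: contraNneq gb => ->.
have gw : g != w by apply: contraNneq gb => ->.
have nw1 : ~~ inc e1 w.
  apply/negP => iw; case: (inc_cases i1 iw) => ew.
    by move: uw; rewrite ew eqxx.
  by move: gw; rewrite -o1 -ew eqxx.
have nu2 : ~~ inc e2 u.
  apply/negP => iu; case: (inc_cases i2 iu) => eu.
    by move: uw; rewrite eu eqxx.
  by move: gu; rewrite -o2 -eu eqxx.
pose D1 := flip Dm e1; pose D2 := flip D1 e2.
suff : (#|bad D2| < #|bad Dm|)%N by rewrite ltnNge Dmin.
apply: (@leq_ltn_trans #|g |: (bad Dm :\ u :\ w)|).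
  apply/subset_leq_card/subsetP => v vb.
  rewrite in_setU1 !in_setD1; case: (boolP (inc e2 v)) => iv.
    have nb := bad_flip_inc e2K iv vb.
    case: (inc_cases i2 iv) => ev; last by rewrite ev o2 eqxx.
    by move: nb; rewrite ev /D1 (bad_flip_ninc _ e1K nw1) wb.
  rewrite /D2 (bad_flip_ninc _ e2K iv) in vb.
  case: (boolP (inc e1 v)) => iv1.
    have nb := bad_flip_inc e1K iv1 vb.
    case: (inc_cases i1 iv1) => ev; last by rewrite ev o1 eqxx.
    by move: nb; rewrite ev ub.
  rewrite /D1 (bad_flip_ninc _ e1K iv1) in vb.
  rewrite vb; apply/orP; right.
  rewrite andbT; apply/andP; split.
    by apply: contraNneq iv => ->.
  by apply: contraNneq iv1 => ->.
rewrite cardsU1 [X in (_ < X)%N](cardsD1 u) ub (cardsD1 w (bad Dm :\ u)).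
rewrite !in_setD1 wb (eq_sym w u) uw (negbTE gb) !andbF.
by rewrite addnA ltn_add2r.
Qed.


Hypothesis cardA : #|A| = 3%N.
Hypothesis conn4 : k_edge_connected 4 src tgt.
Variable a0 : V.
Hypothesis a0A : a0 \in A.

Definition xe b := if [pick e | (e \notin K) && inc e b] is Some e then e else k a0 b.
Definition nb b := oth (xe b) b.

Lemma xeP b : b \notin A -> (xe b \notin K) && inc (xe b) b.
Proof.
move=> bB; rewrite /xe; case: pickP => [e //|none].
have [e He] := extra_edge cardA conn4 a0A bB.
by move: (none e); rewrite He.
Qed.

Definition good := ~: A :\: bad Dm.

Lemma bad_sub b : b \in bad Dm -> b \notin A.
Proof. by rewrite /bad !inE => /andP[]. Qed.

Lemma nb_good b : b \in bad Dm -> nb b \in good.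
Proof.
move=> bb; have /andP[xK ix] := xeP (bad_sub bb).
have /andP[h1 h2] := bad_nb bb xK ix.
by rewrite /good in_setD h2 inE h1.
Qed.

Lemma card_bad_good : (#|bad Dm| <= #|good|)%N.
Proof.
have inj : {in bad Dm &, injective nb}.
  move=> u w ub wb e; apply/eqP; case: (boolP (u == w)) => // uw; exfalso.
  have /andP[xKu ixu] := xeP (bad_sub ub).
  have /andP[xKw ixw] := xeP (bad_sub wb).
  have gb : nb u \notin bad Dm.
    by have := nb_good ub; rewrite /good in_setD => /andP[].
  exact: (no_two gb ub wb uw xKu xKw ixu erefl ixw (esym e)).
rewrite -(card_in_imset inj); apply/subset_leq_card/subsetP => x.
by case/imsetP => b bb ->; apply: nb_good.
Qed.

Lemma good_ge7 (t : nat) : (14 <= t)%N -> #|V| = (t + 3)%N -> (7 <= #|good|)%N.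
Proof.
move=> t14 cV.
have cB : #|~: A| = t by move: (cardsC A); rewrite cardA cV; lia.
have sB : ~: A :&: bad Dm = bad Dm.
  by apply/setIidPr/subsetP => b bb; rewrite inE bad_sub.
have := cardsID (bad Dm) (~: A); rewrite sB cB -/good => ht.
have := card_bad_good; move: ht; lia.
Qed.

Lemma Z3_mul3 (c : 'Z_3) : c *+ 3 = 0.
Proof. by case: (Z3_cases c) => ->; apply/eqP; vm_compute. Qed.

Definition aa (i : 'I_3) : V := enum_val (A := A) (cast_ord (esym cardA) i).
Lemma aa_in i : aa i \in A.
Proof. exact: enum_valP. Qed.
Lemma aa_inj : injective aa.
Proof. by move=> i j /enum_val_inj /(congr1 val) /= ij; apply: val_inj. Qed.
Lemma aa_surj a : a \in A -> exists i, a = aa i.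
Proof.
move=> aA; exists (cast_ord cardA (enum_rank_in aA a)).
by rewrite /aa cast_ordK enum_rankK_in.
Qed.

Lemma card_sum (P : pred E) : #|[set e | P e]| = (\sum_e (P e : nat))%N.
Proof.
rewrite -sum1_card big_mkcond /=; apply: eq_bigr => e _; rewrite inE.
by case: (P e).
Qed.

Lemma deg_flow (D : E -> bool) v :
  ((outdeg src tgt D v)%:R - (indeg src tgt D v)%:R : 'Z_3) = flowT D v.
Proof.
by rewrite /flowT /contrib sumrB /outdeg /indeg !card_sum !natr_sum.
Qed.

Lemma sum_eq1 (x : V) : \sum_v ((x == v)%:R : 'Z_3) = 1.
Proof.
rewrite (bigD1 x) //= eqxx big1 ?addr0 // => v /negbTE.
by rewrite eq_sym => ->.
Qed.

Lemma flow_total (D : E -> bool) : \sum_v flowT D v = 0.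
Proof.
rewrite /flowT exchange_big big1 // => e _.
by rewrite /contrib sumrB !sum_eq1 subrr.
Qed.

Lemma sumA_if (j : V) (x y : 'Z_3) : j \in A ->
  \sum_(a in A) (if a == j then x else y) = x + y *+ 2.
Proof.
move=> jA; rewrite (bigD1 j) //= eqxx.
rewrite (eq_bigr (fun _ => y)); last by move=> a /andP[_ /negbTE->].
rewrite sumr_const; congr (_ + _); congr (_ *+ _).
have := cardsD1 j A; rewrite jA cardA => /eqP; rewrite eqSS => /eqP ->.
by apply: eq_card => a; rewrite !inE andbC.
Qed.

Variable gv : 'I_7 -> V.
Hypothesis gv_inj : injective gv.
Hypothesis gv_good : forall i, gv i \in good.
Variable W : 'I_7 -> 'I_3.

Definition gam b := beta b - flowX Dm b.
Definition Jf b : 'I_3 := if [pick i | gv i == b] is Some i then W i else 0.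
Definition outf b a := if b \in bad Dm then hdD Dm (xe b) == b
  else (if gam b == 1 then a != aa (Jf b) else a == aa (Jf b)).
Definition bK e := if src e \in A then tgt e else src e.
Definition aK e := if src e \in A then src e else tgt e.
Definition Dfin e := if e \in K then (src e == bK e) == outf (bK e) (aK e) else Dm e.
Definition cb b a : 'Z_3 := if outf b a then 1 else -1.

Lemma Jf_gv i : Jf (gv i) = W i.
Proof.
rewrite /Jf; case: pickP => [j /eqP/gv_inj -> //|].
by move/(_ i); rewrite eqxx.
Qed.

Lemma good_gam b : b \in good -> gam b != 0.
Proof.
move=> /setDP [bB nb]; move: bB; rewrite inE => bB.
rewrite /gam subr_eq0; apply: contra nb => e; by rewrite /bad !inE bB.
Qed.

Lemma Dfin_k a b : a \in A -> b \notin A ->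
  tlD Dfin (k a b) = (if outf b a then b else a) /\
  hdD Dfin (k a b) = (if outf b a then a else b).
Proof.
move=> aA bB; have J := kJ aA bB.
have ab : (a == b) = false by apply/negbTE; apply: contraNneq bB => <-.
rewrite /otail /Defs.ohead /Dfin kK // /bK /aK.
move: J; rewrite /joins; case/orP => /andP[/eqP-> /eqP->].
  by rewrite aA ab; case: (outf b a).
by rewrite (negbTE bB) eqxx; case: (outf b a).
Qed.

Definition Rel x y := [exists e, (tlD Dfin e == x) && (hdD Dfin e == y)].

Lemma arc_k a b : a \in A -> b \notin A -> if outf b a then Rel b a else Rel a b.
Proof.
move=> aA bB; have [h1 h2] := Dfin_k aA bB.
by case: (outf b a) h1 h2 => h1 h2; apply/existsP; exists (k a b); rewrite h1 h2 !eqxx.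
Qed.

Lemma arc_X e : e \notin K -> Rel (tlD Dm e) (hdD Dm e).
Proof.
move=> eK; apply/existsP; exists e.
by rewrite /otail /Defs.ohead /Dfin (negbTE eK) !eqxx.
Qed.

Lemma flow_split v : flowT Dfin v =
  \sum_(a in A) \sum_(b in ~: A) contrib Dfin (k a b) v + flowX Dm v.
Proof.
rewrite /flowT (bigID (fun e => e \in K)) /=; congr (_ + _); last first.
  by apply: eq_bigr => e eK; apply: contrib_ext; rewrite /Dfin (negbTE eK).
rewrite /K big_imset /=; last first.
  move=> [a b] [a' b']; rewrite !in_setX /= => /andP[aA bB] /andP[aA' bB'] /=.
  by move/(k_inj aA _ aA') => [| |-> ->] //; rewrite -in_setC.
rewrite (eq_bigl (fun p => (p.1 \in A) && (p.2 \in ~: A))); last by move=> [a b]; rewrite in_setX.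
by rewrite -(pair_big (fun a => a \in A) (fun b => b \in ~: A) (fun a b => contrib Dfin (k a b) v)).
Qed.

Lemma flow_B b : b \notin A -> flowT Dfin b = \sum_(a in A) cb b a + flowX Dm b.
Proof.
move=> bB; rewrite flow_split; congr (_ + _); apply: eq_bigr => a aA.
rewrite (bigD1 b) ?inE //= big1 ?addr0; last first.
  move=> b' /andP[bB' nb]; apply: contrib_ninc; apply/negP => ib.
  have bB'' : b' \notin A by rewrite -in_setC.
  case: (inc_k aA bB'' ib) => eb; first by move: bB; rewrite eb aA.
  by move: nb; rewrite eb eqxx.
have [h1 h2] := Dfin_k aA bB.
have ab : (b == a) = false by apply/negbTE; apply: contraNneq bB => ->.
by rewrite /contrib h1 h2 /cb; case: (outf b a); rewrite ?eqxx ?ab 1?eq_sym ?ab /= ?subr0 ?sub0r.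
Qed.

Lemma flow_A a : a \in A -> flowT Dfin a = - \sum_(b in ~: A) cb b a + flowX Dm a.
Proof.
move=> aA; rewrite flow_split; congr (_ + _).
rewrite (bigD1 a) //= [X in _ + X]big1 ?addr0; last first.
  move=> a' /andP[aA' na]; apply: big1 => b; rewrite inE => bB.
  apply: contrib_ninc; apply/negP => /(inc_k aA' bB) [ea|ea].
    by move: na; rewrite ea eqxx.
  by move: bB; rewrite -ea aA.
rewrite -sumrN; apply: eq_bigr => b; rewrite inE => bB.
have [h1 h2] := Dfin_k aA bB.
have ab : (a == b) = false by apply/negbTE; apply: contraNneq bB => <-.
by rewrite /contrib h1 h2 /cb; case: (outf b a); rewrite ?eqxx ?ab 1?eq_sym ?ab /= ?subr0 ?sub0r ?opprK.
Qed.

Lemma sum_cb_B b : b \notin A ->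
  \sum_(a in A) cb b a = if b \in bad Dm then 0 else gam b.
Proof.
move=> bB; rewrite /cb /outf; case: ifP => bb.
  by rewrite sumr_const cardA Z3_mul3.
have gb : b \in good by rewrite /good in_setD bb inE.
have g0 := good_gam gb.
have jA := aa_in (Jf b).
case g1: (gam b == 1).
  rewrite (eq_bigr (fun a => if a == aa (Jf b) then -1 else 1)); last first.
    by move=> a _; case: (a == _).
  by rewrite sumA_if // (eqP g1); apply/eqP; vm_compute.
rewrite (eq_bigr (fun a => if a == aa (Jf b) then 1 else -1)) //.
rewrite sumA_if //.
by case: (Z3_cases (gam b)) g0 g1 => -> // _ _; apply/eqP; vm_compute.
Qed.

Lemma flow_B_ok b : b \notin A -> flowT Dfin b = beta b.
Proof.
move=> bB; rewrite flow_B // sum_cb_B //; case: ifP => bb.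
  by move: bb; rewrite /bad !inE bB /= => /eqP ->; rewrite add0r.
by rewrite /gam subrK.
Qed.

Lemma gv_notA j : gv j \notin A.
Proof. by have := gv_good j; rewrite /good in_setD in_setC => /andP[]. Qed.
Lemma gv_nbad j : gv j \notin bad Dm.
Proof. by have := gv_good j; rewrite /good in_setD => /andP[]. Qed.

Lemma outf_gv j i : outf (gv j) (aa i) = outb (gam (gv j)) (W j) i.
Proof.
by rewrite /outf /outb (negbTE (gv_nbad j)) Jf_gv (inj_eq aa_inj).
Qed.

Lemma cb_gv j i : cb (gv j) (aa i) = gam (gv j) * sgn i (W j).
Proof.
rewrite /cb outf_gv /outb /sgn.
have g0 := good_gam (gv_good j).
case g1: (gam (gv j) == 1); first by rewrite (eqP g1) mul1r; case: (i == W j).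
case: (Z3_cases (gam (gv j))) g0 g1 => -> // _ _;
  case: (i == W j); apply/eqP; vm_compute; by [].
Qed.

Definition G7 : {set V} := [set gv j | j in 'I_7].

Definition cbz b a : 'Z_3 := if b \in bad Dm then (if hdD Dm (xe b) == b then 1 else -1)
  else if gam b == 1 then (if a != aa 0 then 1 else -1) else (if a == aa 0 then 1 else -1).

Lemma cb_cbz b a : b \notin G7 -> cb b a = cbz b a.
Proof.
move=> bG; have J0 : Jf b = 0.
  rewrite /Jf; case: pickP => // j /eqP e; move: bG; rewrite -e.
  by rewrite /G7 mem_imset.
by rewrite /cb /cbz /outf J0; case: (b \in bad Dm) => //; case: (gam b == 1).
Qed.

Definition Rz i := \sum_(b in ~: A :\: G7) cbz b (aa i).

Lemma sum_cb_A i : \sum_(b in ~: A) cb b (aa i) =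
  \sum_(j < 7) gam (gv j) * sgn i (W j) + Rz i.
Proof.
rewrite (big_setID G7); congr (_ + _); last first.
  by apply: eq_bigr => b /setDP [_ bG]; apply: cb_cbz.
have -> : ~: A :&: G7 = G7.
  apply/setIidPr/subsetP => b /imsetP [j _ ->]; rewrite inE; exact: gv_notA.
rewrite big_imset /=; last by move=> x y _ _; apply: gv_inj.
by apply: eq_bigr => j _; rewrite cb_gv.
Qed.

Lemma good_mixed b : b \in good -> exists a a', [/\ a \in A, a' \in A, outf b a & ~~ outf b a'].
Proof.
move=> gb; have nb : b \notin bad Dm by move: gb; rewrite /good in_setD => /andP[].
pose j0 := Jf b; pose o : 'I_3 := if j0 == 0 then 1 else 0.
have oj : aa o != aa j0.
  rewrite (inj_eq aa_inj) /o; case: ifP => [/eqP ->|/negbT]; first by [].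
  by rewrite eq_sym.
rewrite /outf (negbTE nb) -/j0; case: (gam b == 1).
  by exists (aa o), (aa j0); rewrite !aa_in oj eqxx.
by exists (aa j0), (aa o); rewrite !aa_in eqxx (negbTE oj).
Qed.

Variable h : 'I_3.
Hypothesis hub : forall i : 'I_3, i != h ->
  [|| (~~ outb (gam (gv 0)) (W 0) i && outb (gam (gv 0)) (W 0) h),
      (~~ outb (gam (gv 1)) (W 1) i && outb (gam (gv 1)) (W 1) h)
    | (~~ outb (gam (gv 2)) (W 2) i && outb (gam (gv 2)) (W 2) h)] &&
  [|| (~~ outb (gam (gv 0)) (W 0) h && outb (gam (gv 0)) (W 0) i),
      (~~ outb (gam (gv 1)) (W 1) h && outb (gam (gv 1)) (W 1) i)
    | (~~ outb (gam (gv 2)) (W 2) h && outb (gam (gv 2)) (W 2) i)].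

Local Notation H := (aa h).

Lemma via j i1 i2 : ~~ outf (gv j) (aa i1) -> outf (gv j) (aa i2) -> connect Rel (aa i1) (aa i2).
Proof.
move=> o1 o2.
have a1 := arc_k (aa_in i1) (gv_notA j); rewrite (negbTE o1) in a1.
have a2 := arc_k (aa_in i2) (gv_notA j); rewrite o2 in a2.
exact: connect_trans (connect1 a1) (connect1 a2).
Qed.

Lemma reachA i : connect Rel H (aa i) && connect Rel (aa i) H.
Proof.
case: (eqVneq i h) => [->|ih]; first by rewrite connect0.
have /andP[/or3P c1 /or3P c2] := hub ih.
apply/andP; split.
  by case: c2 => /andP[o1 o2]; apply: (via (j := _)); rewrite outf_gv; eassumption.
by case: c1 => /andP[o1 o2]; apply: (via (j := _)); rewrite outf_gv; eassumption.
Qed.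

Lemma reachA' a : a \in A -> connect Rel H a && connect Rel a H.
Proof. by move=> /aa_surj [i ->]; apply: reachA. Qed.

Lemma reach_good b : b \in good -> connect Rel H b && connect Rel b H.
Proof.
move=> gb; have bB : b \notin A by move: gb; rewrite /good in_setD in_setC => /andP[].
have [a [a' [aA aA' o o']]] := good_mixed gb.
have r1 := arc_k aA bB; rewrite o in r1.
have r2 := arc_k aA' bB; rewrite (negbTE o') in r2.
have /andP[_ h1] := reachA' aA; have /andP[h2 _] := reachA' aA'.
apply/andP; split.
  exact: connect_trans h2 (connect1 r2).
exact: connect_trans (connect1 r1) h1.
Qed.

Lemma reach_all v : connect Rel H v && connect Rel v H.
Proof.
case: (boolP (v \in A)) => vA; first exact: reachA'.
case: (boolP (v \in bad Dm)) => vb; last by apply: reach_good; rewrite /good in_setD vb inE.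
have /andP[xK ix] := xeP vA.
have gg := nb_good vb; have /andP[rg1 rg2] := reach_good gg.
have ng : nb v != v := oth_ne ix.
have ig : inc (xe v) (nb v) := inc_oth ix.
have hA := aa_in h.
have ak := arc_k hA vA.
have ax := arc_X xK.
case hv: (hdD Dm (xe v) == v).
  have tg : tlD Dm (xe v) = nb v.
    have ng' : (v == nb v) = false by rewrite eq_sym (negbTE ng).
    by apply/eqP; move: ig; rewrite (inc_tlhd Dm) (eqP hv) ng' orbF.
  rewrite /outf vb hv in ak; rewrite (eqP hv) tg in ax.
  apply/andP; split; first exact: connect_trans rg1 (connect1 ax).
  exact: connect1 ak.
have tv : tlD Dm (xe v) = v.
  by apply/eqP; move: ix; rewrite (inc_tlhd Dm) hv orbF.
have hg : hdD Dm (xe v) = nb v.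
  by apply: tl_or_hd => //; rewrite tv eq_sym.
rewrite /outf vb hv in ak; rewrite tv hg in ax.
apply/andP; split; first exact: connect1 ak.
exact: connect_trans (connect1 ax) rg2.
Qed.

Lemma sc : strongly_connected src tgt Dfin.
Proof.
move=> u v; have /andP[_ h1] := reach_all u; have /andP[h2 _] := reach_all v.
exact: connect_trans h1 h2.
Qed.

Hypothesis val : forall i : 'I_3, i != 2 ->
  \sum_(j < 7) gam (gv j) * sgn i (W j) = flowX Dm (aa i) - beta (aa i) - Rz i.
Hypothesis beta0 : \sum_v beta v = 0.

Lemma flow_ok1 v : v != aa 2 -> flowT Dfin v = beta v.
Proof.
move=> v2; case: (boolP (v \in A)) => vA; last exact: flow_B_ok.
have [i ei] := aa_surj vA; rewrite ei in v2 *.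
have i2 : i != 2 by apply: contraNneq v2 => ->.
rewrite flow_A ?aa_in // sum_cb_A val //.
ring.
Qed.

Lemma flow_ok v : flowT Dfin v = beta v.
Proof.
case: (eqVneq v (aa 2)) => [->|]; last exact: flow_ok1.
have : \sum_v (flowT Dfin v - beta v) = 0 by rewrite sumrB flow_total beta0 subrr.
rewrite (bigD1 (aa 2)) //= big1 ?addr0; first by move/eqP; rewrite subr_eq0 => /eqP.
by move=> w /flow_ok1 ->; rewrite subrr.
Qed.

Lemma final_ok : strongly_connected src tgt Dfin /\
  forall v, ((outdeg src tgt Dfin v)%:R - (indeg src tgt Dfin v)%:R : 'Z_3) = beta v.
Proof. by split; [exact: sc | move=> v; rewrite deg_flow flow_ok]. Qed.

End Main.

Local Open Scope ring_scope.

Lemma sum7 (F : 'I_7 -> 'Z_3) : \sum_(j < 7) F j = F 0 + F 1 + F 2 + F 3 + F 4 + F 5 + F 6.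
Proof.
rewrite !big_ord_recl big_ord0 addr0 !addrA.
by congr (F _ + F _ + F _ + F _ + F _ + F _ + F _); apply: val_inj.
Qed.

Local Close Scope ring_scope.

Theorem mainTheorem13 (t : nat) (V E : finType) (src tgt : E -> V) :
  14 <= t ->
  #|V| = t + 3 ->
  loopless src tgt ->
  k_edge_connected 4 src tgt ->
  contains_spanning_K3 src tgt ->
  in_S3 src tgt.
Proof.
move=> t14 cV loopl conn4 [A [cA hAB]] beta beta0.
have [a0 a0A] : exists a0, a0 \in A by apply/card_gt0P; rewrite cA.
have [b0 b0B] : exists b0, b0 \in ~: A.
  by apply/card_gt0P; move: (cardsC A); rewrite cA cV; lia.
have b0A : b0 \notin A by rewrite -in_setC.
have [e0 _] := hAB a0 b0 a0A b0A.
pose k a b := if [pick e | joins src tgt e a b] is Some e then e else e0.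
have kJ : forall a b, a \in A -> b \notin A -> joins src tgt (k a b) a b.
  move=> a b aA bB; rewrite /k; case: pickP => // none.
  by have [e He] := hAB a b aA bB; move: (none e); rewrite He.
pose P n := [exists D : {ffun E -> bool}, #|bad src tgt A k beta D| == n].
have exP : exists n, P n by exists #|bad src tgt A k beta [ffun=> true]|; apply/existsP; exists [ffun=> true].
case: (ex_minnP exP) => n /existsP [Dm /eqP Dn] nmin.
have Dmin : forall D : E -> bool, (#|bad src tgt A k beta Dm| <= #|bad src tgt A k beta D|)%N.
  move=> D; rewrite Dn.
  have -> : bad src tgt A k beta D = bad src tgt A k beta [ffun e => D e].
    apply/setP => v; rewrite !inE /flowX; congr (_ && (_ == _)).
    by apply: eq_bigr => e _; apply: contrib_ext; rewrite ffunE.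
  by apply: nmin; apply/existsP; exists [ffun e => D e].
have h7 := good_ge7 loopl kJ Dmin cA conn4 a0A t14 cV.
pose gv (j : 'I_7) := enum_val (A := good src tgt A k beta Dm) (widen_ord h7 j).
have gv_inj : injective gv.
  by move=> i j /enum_val_inj /(congr1 val) /= ij; apply: val_inj.
have gv_good : forall j, gv j \in good src tgt A k beta Dm by move=> j; apply: enum_valP.

have gnz : forall j, gam src tgt A k beta Dm (gv j) != 0%R by move=> j; apply: good_gam.
have [w0 [w1 [w2 [h Hh]]]] := @gadget _ _ _ (gnz 0%R) (gnz 1%R) (gnz 2%R).
pose gg j := gam src tgt A k beta Dm (gv j).
pose T (i : 'I_3) := (flowX src tgt A k Dm (aa cA i) - beta (aa cA i) - Rz src tgt k beta Dm cA a0 gv i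
   - (gg 0 * sgn i w0 + gg 1 * sgn i w1 + gg 2 * sgn i w2))%R.
have [w3 [w4 [w5 [w6 [V0 V1]]]]] := @value4 _ _ _ _ (T 0%R) (T 1%R) (gnz 3%R) (gnz 4%R) (gnz 5%R) (gnz 6%R).
pose W (j : 'I_7) : 'I_3 := nth 0%R [:: w0; w1; w2; w3; w4; w5; w6] j.
eexists; apply: (final_ok (W := W) (h := h) loopl kJ Dmin conn4 a0A gv_inj gv_good) => //.
move=> i i2; rewrite sum7.
have WW : [/\ W 0%R = w0, W 1%R = w1, W 2%R = w2 & W 3%R = w3] /\ [/\ W 4%R = w4, W 5%R = w5 & W 6%R = w6] by [].
case: WW => [[-> -> -> ->] [-> -> ->]].
case: (I3_cases i) i2 => -> // _.
  have HX : (flowX src tgt A k Dm (aa cA 0) - beta (aa cA 0) - Rz src tgt k beta Dm cA a0 gv 0 =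
    (gg 0 * sgn 0 w0 + gg 1 * sgn 0 w1 + gg 2 * sgn 0 w2) + T 0)%R by rewrite /T; ring.
  by rewrite HX -V0 /gg; ring.
have HX : (flowX src tgt A k Dm (aa cA 1) - beta (aa cA 1) - Rz src tgt k beta Dm cA a0 gv 1 =
  (gg 0 * sgn 1 w0 + gg 1 * sgn 1 w1 + gg 2 * sgn 1 w2) + T 1)%R by rewrite /T; ring.
by rewrite HX -V1 /gg; ring.
Qed.
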